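(* Let $A$ be an $n \times n$ real symmetric matrix and let $\alpha \subseteq \{1,2,\dots,n\}$ with $|\alpha| \geq 2$. Then $\alpha$ is a P-set of $A$ if and only if every subset $\gamma \subseteq \alpha$ with $|\gamma| = 2$ is a P-set of $A$.
   Context: All matrices are real. For an $n\times n$ matrix $A$ and $\alpha \subseteq \{1,\dots,n\}$, $A(\alpha)$ denotes the principal submatrix obtained by deleting the rows and columns indexed by $\alpha$, and $\nu(A)$ denotes the nullity of $A$. A set $\alpha$ is a P-set of $A$ if $\nu(A(\alpha)) = \nu(A) + |\alpha|$. *)

(* Defs.v *)
From HB Require Import structures.
From mathcomp Require Import all_boot all_order all_algebra.
Set Implicit Arguments. Unset Strict Implicit. Unset Printing Implicit Defensive.
Import GRing.Theory Num.Theory.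
Local Open Scope ring_scope.

Definition nullity (F : fieldType) (m : nat) (A : 'M[F]_m) : nat := (m - \rank A)%N.

(* A(alpha): principal submatrix obtained by deleting rows and columns in alpha,
   i.e. keeping the indices in the complement, in increasing order. *)
Definition del_princ (F : fieldType) (n : nat) (A : 'M[F]_n) (alpha : {set 'I_n})
  : 'M[F]_#|~: alpha| :=
  \matrix_(i, j) A (enum_val i) (enum_val j).

Definition Pset (F : fieldType) (n : nat) (A : 'M[F]_n) (alpha : {set 'I_n}) : Prop :=
  nullity (del_princ A alpha) = (nullity A + #|alpha|)%N.

(* Main.v *)
Require Import Defs.
From HB Require Import structures.
From mathcomp Require Import all_boot all_order all_algebra.
From mathcomp Require Import zify.
Import GRing.Theory Num.Theory.
Local Open Scope ring_scope.
Set Implicit Arguments. Unset Strict Implicit. Unset Printing Implicit Defensive.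

Definition selm (F : fieldType) (n : nat) (b : {set 'I_n}) : 'M[F]_(#|~: b|, n) :=
  \matrix_(i, j) ((enum_val i == j)%:R).

Lemma selmTr (F : fieldType) n (b : {set 'I_n}) p (X : 'M[F]_(p, n)) r l :
  (X *m (selm F b)^T) r l = X r (enum_val l).
Proof.
rewrite mxE (bigD1 (enum_val l)) //= big1 => [|j /negbTE hj].
  by rewrite !mxE eqxx mulr1 addr0.
by rewrite !mxE eq_sym hj mulr0.
Qed.

Lemma selmL (F : fieldType) n (b : {set 'I_n}) p (Y : 'M[F]_(n, p)) i j :
  (selm F b *m Y) i j = Y (enum_val i) j.
Proof.
rewrite mxE (bigD1 (enum_val i)) //= big1 => [|l /negbTE hl].
  by rewrite !mxE eqxx mul1r addr0.
by rewrite !mxE eq_sym hl mul0r.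
Qed.

Lemma selm_out (F : fieldType) n (b : {set 'I_n}) p (w : 'M[F]_(p, #|~: b|)) r j :
  j \in b -> (w *m selm F b) r j = 0.
Proof.
move=> hj; rewrite mxE big1 // => l _; rewrite !mxE.
have : enum_val l \in ~: b := enum_valP l.
rewrite inE; case: eqP => [->|_]; first by rewrite hj.
by rewrite mulr0.
Qed.

Lemma selm_in (F : fieldType) n (b : {set 'I_n}) p (w : 'M[F]_(p, #|~: b|)) r l :
  (w *m selm F b) r (enum_val l) = w r l.
Proof.
rewrite mxE (bigD1 l) //= big1 => [|l' hl].
  by rewrite !mxE eqxx mulr1 addr0.
rewrite !mxE (inj_eq enum_val_inj) (negbTE hl) mulr0 //.
Qed.

Lemma selm_supp (F : fieldType) n (b : {set 'I_n}) (x : 'rV[F]_n) :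
  (forall j, j \in b -> x 0 j = 0) -> x = x *m (selm F b)^T *m selm F b.
Proof.
move=> hx; apply/matrixP => r j; rewrite [r]ord1.
case: (boolP (j \in b)) => hj; first by rewrite selm_out // hx.
have hjS : j \in ~: b by rewrite inE.
by rewrite -(enum_rankK_in hjS hjS) selm_in selmTr.
Qed.

Lemma selmPPt (F : fieldType) n (b : {set 'I_n}) :
  selm F b *m (selm F b)^T = 1%:M.
Proof.
apply/matrixP => i j; rewrite selmTr !mxE (inj_eq enum_val_inj) //.
Qed.

Lemma dpE (F : fieldType) n (A : 'M[F]_n) (b : {set 'I_n}) :
  del_princ A b = selm F b *m A *m (selm F b)^T.
Proof. by apply/matrixP => i j; rewrite selmTr selmL !mxE. Qed.

Lemma deltaT (F : fieldType) n (z : 'rV[F]_n) l :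
  (z *m (delta_mx (0 : 'I_1) l)^T) 0 0 = z 0 l.
Proof.
rewrite mxE (bigD1 l) //= big1 => [|j hj].
  by rewrite !mxE !eqxx mulr1 addr0.
by rewrite !mxE (negbTE hj) andbF mulr0.
Qed.

Lemma null_vanish (F : fieldType) n (A : 'M[F]_n) (z y : 'rV[F]_n) l :
  A^T = A -> z *m A = 0 -> y *m A = delta_mx (0 : 'I_1) l -> z 0 l = 0.
Proof.
move=> hA hz hy; rewrite -deltaT -hy trmx_mul hA mulmxA hz mul0mx mxE //.
Qed.
Definition wit (F : fieldType) n (A : 'M[F]_n) (b : {set 'I_n}) :=
  forall i, i \in b -> exists x : 'rV[F]_n,
    x *m A = delta_mx (0 : 'I_1) i /\ forall j, j \in b -> x 0 j = 0.

Lemma pset_char (F : fieldType) n (A : 'M[F]_n) (b : {set 'I_n}) :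
  A^T = A -> Pset A b <-> wit A b.
Proof.
move=> hA.
set P := selm F b.
have PPt : P *m P^T = 1%:M := selmPPt F b.
have Pfree : row_free P by apply/row_freeP; exists P^T.
have rP : \rank P = #|~: b| by apply/eqP.
set N := P *m A.
set K := kermx (N *m P^T).
have h1 : nullity (del_princ A b) = \rank K by rewrite /nullity dpE mxrank_ker.
have h2 := mxrank_mul_ker K N.
have sNK : (kermx N <= K)%MS.
  by apply/sub_kermxP; rewrite mulmxA mulmx_ker mul0mx.
have h3 : \rank (K :&: kermx N)%MS = \rank (kermx N) by rewrite (capmx_idPr sNK).
have h4 : (\rank (kermx N) <= n - \rank A)%N.
  rewrite -(mxrankMfree _ Pfree) -mxrank_ker; apply: mxrankS.
  by apply/sub_kermxP; rewrite -mulmxA mulmx_ker.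
have h5 : (K *m N <= kermx P^T)%MS.
  by apply/sub_kermxP; rewrite -mulmxA mulmx_ker.
have cn : (#|b| + #|~: b|)%N = n by rewrite cardsC card_ord.
have rk : \rank (kermx P^T) = #|b|.
  by rewrite mxrank_ker mxrank_tr rP -{1}cn addnK.
have h6 : (\rank (K *m N) <= #|b|)%N by rewrite -rk mxrankS.
have rA : (\rank A <= n)%N := rank_leq_col A.
have dP : forall i, i \in b -> (delta_mx (0 : 'I_1) i <= kermx P^T)%MS.
  move=> i hi; apply/sub_kermxP; apply/matrixP => r l.
  rewrite selmTr !mxE.
  have : enum_val l \in ~: b := enum_valP l.
  rewrite inE => hl; have ne : i != enum_val l.
    by apply/eqP => e; move: hl; rewrite -e hi.
  by rewrite (eq_sym (enum_val l)) (negbTE ne) andbF.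
rewrite /Pset /nullity -/(nullity _) h1 /nullity.
split => [H|H].
  have ekn : \rank (K *m N) = #|b| by lia.
  have sk : (kermx P^T <= K *m N)%MS.
    by case: (mxrank_leqif_sup h5) => _ <-; rewrite ekn rk.
  move=> i hi; have /submxP [w hw] := submx_trans (dP i hi) sk.
  exists (w *m K *m P); split.
    by rewrite hw -!mulmxA.
  by move=> j hj; rewrite selm_out.
have g1 : (kermx P^T <= K *m N)%MS.
  apply/row_subP => r; set y := row r _.
  have hy : y *m P^T = 0 by rewrite /y -row_mul mulmx_ker row0.
  rewrite (row_sum_delta y); apply: summx_sub => j _.
  case: (boolP (j \in b)) => hj.
    apply: scalemx_sub; have [x [hx hx0]] := H j hj.
    have xe := selm_supp hx0; rewrite -/P in xe.
    have : ((x *m P^T) *m N = delta_mx 0 j)%R by rewrite /N mulmxA -xe.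
    move=> <-; apply: submxMr; apply/sub_kermxP.
    have -> : x *m P^T *m (N *m P^T) = (x *m P^T *m P *m A) *m P^T by rewrite /N !mulmxA.
    by rewrite -xe hx; apply/sub_kermxP/dP.
  have hjS : j \in ~: b by rewrite inE.
  have : y 0 j = 0.
    by rewrite -(enum_rankK_in hjS hjS) -selmTr -/P hy mxE.
  by move=> ->; rewrite scale0r sub0mx.
have g2 : (kermx A <= kermx N *m P)%MS.
  apply/row_subP => r; set z := row r _.
  have hz : z *m A = 0 by rewrite /z -row_mul mulmx_ker row0.
  have hz0 : forall j, j \in b -> z 0 j = 0.
    by move=> j hj; have [x [hx _]] := H j hj; exact: (null_vanish hA hz hx).
  rewrite (selm_supp hz0) -/P; apply: submxMr; apply/sub_kermxP.
  have -> : z *m P^T *m N = z *m P^T *m P *m A by rewrite /N !mulmxA.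
  by rewrite -/P -(selm_supp hz0).
have r1 := mxrankS g1; rewrite rk in r1.
have r2 := mxrankS g2; rewrite mxrankMfree // mxrank_ker in r2.
lia.
Qed.
Theorem theorem2p5 (R : realFieldType) (n : nat) (A : 'M[R]_n)
  (alpha : {set 'I_n}) :
  A^T = A -> (2 <= #|alpha|)%N ->
  (Pset A alpha <->
   (forall gamma : {set 'I_n}, gamma \subset alpha -> #|gamma| = 2%N -> Pset A gamma)).
Proof.
move=> hA h2; split.
  move=> /(pset_char _ hA) W gamma sga _; apply/(pset_char _ hA) => i hi.
  have [x [hx hx0]] := W i (subsetP sga i hi).
  by exists x; split => // j hj; apply: hx0; apply: (subsetP sga).
move=> H; apply/(pset_char _ hA) => i hi.
have pairW : forall j, j \in alpha -> j != i ->
    wit A [set i; j].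
  move=> j hj ne; apply/(pset_char _ hA); apply: H.
    by apply/subsetP => l; rewrite !inE => /orP [] /eqP ->.
  by rewrite cards2 eq_sym ne.
have [j hj] : exists2 j, j \in alpha & j != i.
  have : (0 < #|alpha :\ i|)%N by move: h2; rewrite (cardsD1 i alpha) hi; lia.
  by rewrite card_gt0 => /set0Pn [j]; rewrite !inE => /andP [ne jin]; exists j.
move=> nji.
case: (pairW j hj nji i); first by rewrite !inE eqxx.
move=> x0 [hx0 hx00].
exists x0; split => // l hl.
case: (eqVneq l i) => [->|nli]; first by apply: hx00; rewrite !inE eqxx.
have W1 := pairW l hl nli.
case: (W1 i); first by rewrite !inE eqxx.
move=> x1 [hx1 hx10].
case: (W1 l); first by rewrite !inE eqxx orbT.
move=> y [hy _].
have hz : (x0 - x1) *m A = 0 by rewrite mulmxBl hx0 hx1 subrr.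
have := null_vanish hA hz hy; rewrite !mxE hx10 ?inE ?eqxx ?orbT // subr0; apply.

Qed.
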